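(* Let $k,\lambda,j$ be integers with $k>\lambda>j>1$. If an infinite word avoids $(k,\lambda)$-anti-powers (i.e. has no factor that is a $(k,\lambda)$-anti-power), then it avoids $(k-j,\lambda-j)$-anti-powers.
   Context: A factor is a contiguous subword. A $(k,\lambda)$-anti-power is a word $w=w_1\cdots w_k$ with $|w_1|=\cdots=|w_k|$ (nonempty blocks) such that $|\{i: w_i=w_j\}|\le\lambda$ for each $j\in\{1,\dots,k\}$. *)

(* Defs.v *)
From mathcomp Require Import all_boot.
Set Implicit Arguments. Unset Strict Implicit. Unset Printing Implicit Defensive.

Definition ap_block (A : Type) (m t : nat) (u : seq A) : seq A :=
  take m (drop (t * m) u).

Definition anti_power (A : eqType) (k lam : nat) (u : seq A) : Prop :=
  exists m, 0 < m /\ size u = k * m /\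
    forall j, j < k ->
      count (fun t => ap_block m t u == ap_block m j u) (iota 0 k) <= lam.

Definition factor_of (A : Type) (w : nat -> A) (u : seq A) : Prop :=
  exists i, u = mkseq (fun r => w (i + r)) (size u).

Definition avoids_anti_powers (A : eqType) (k lam : nat) (w : nat -> A) : Prop :=
  forall u, factor_of w u -> ~ anti_power k lam u.

(* Main.v *)
Require Import Defs.
From mathcomp Require Import all_boot.
From mathcomp Require Import zify.

Lemma block_cat (A : Type) (m t : nat) (u v : seq A) :
  0 < m -> t.+1 * m <= size u -> ap_block m t (u ++ v) = ap_block m t u.
Proof.
move=> m0 hs; rewrite /ap_block drop_cat.
have -> : t * m < size u by rewrite mulSn in hs; lia.
rewrite take_cat size_drop.
case: ifP => h //.
have e : m = size u - t * m by rewrite mulSn in hs; move/negbT: h; lia.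
rewrite -e subnn take0 cats0 take_oversize //.
by rewrite size_drop -e.
Qed.

Theorem lemma4p1 (A : eqType) (k lam j : nat) (w : nat -> A) :
  lam < k -> j < lam -> 1 < j ->
  avoids_anti_powers k lam w -> avoids_anti_powers (k - j) (lam - j) w.
Proof.
move=> hk hj h1 H u [i hu] [m [m0 [hsz hcnt]]].
set v := mkseq (fun r => w (i + ((k - j) * m + r))) (j * m).
apply: (H (u ++ v)).
  exists i; rewrite size_cat hu size_mkseq /v size_mkseq.
  rewrite /mkseq iotaD map_cat add0n.
  congr (_ ++ _).
  rewrite hsz.
  have -> : iota ((k-j)*m) (j*m) = [seq (k-j)*m + r | r <- iota 0 (j*m)] by rewrite -iotaDl addn0.
  rewrite -map_comp; apply: eq_map => r /=; by rewrite addnA.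
exists m; split => //; split.
  rewrite size_cat hsz size_mkseq -mulnDl; congr (_ * _); lia.
move=> t tk.
have kk : k = (k - j) + j by lia.
rewrite kk iotaD count_cat add0n.
have c2 := count_size (fun t0 => ap_block m t0 (u ++ v) == ap_block m t (u ++ v)) (iota (k - j) j).
rewrite size_iota in c2.
suff: count (fun t0 => ap_block m t0 (u ++ v) == ap_block m t (u ++ v)) (iota 0 (k - j)) <= lam - j by lia.
have eqb : forall t0, t0 < k - j -> ap_block m t0 (u ++ v) = ap_block m t0 u.
  move=> t0 ht0; apply: block_cat => //; rewrite hsz leq_mul2r; lia.
case: (boolP [exists t1 : 'I_(k - j), ap_block m t1 (u ++ v) == ap_block m t (u ++ v)]).
  move/existsP=> [t1 /eqP e]; rewrite -e.
  rewrite (@eq_in_count _ _ (fun t0 => ap_block m t0 u == ap_block m t1 u)).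
    exact: hcnt.
  move=> t0; rewrite mem_iota add0n => /andP[_ ht0].
  by rewrite eqb // eqb.
move/existsPn=> hn.
rewrite (@eq_in_count _ _ pred0) ?count_pred0 //.
move=> t0; rewrite mem_iota add0n => /andP[_ ht0].
exact: negbTE (hn (Ordinal ht0)).
Qed.
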